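(* For all integers $n\ge0$ and $p\ge1$, $$\mathcal{B}_{n,p}=p\int_0^1(1-t)^{p-1}\phi_n(t)\,dt.$$
   Context: $S(n,k)$ denotes the Stirling numbers of the second kind and $\phi_n(t)=\sum_{k=0}^nS(n,k)t^k$ the Bell (exponential) polynomials. For an integer $p\ge0$, the $p$-Bell numbers $\mathcal{B}_{n,p}$ are defined by $\sum_{n\ge0}\mathcal{B}_{n,p}\frac{z^n}{n!}=\sum_{n\ge0}\binom{n+p}{p}^{-1}\frac{(e^z-1)^n}{n!}$. *)

(* Defs.v *)
From HB Require Import structures.
From mathcomp Require Import all_boot all_order all_algebra.
From mathcomp Require Import all_classical all_reals all_analysis.
Set Implicit Arguments. Unset Strict Implicit. Unset Printing Implicit Defensive.
Import Order.TTheory GRing.Theory Num.Theory.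
Local Open Scope ring_scope.

Fixpoint stirling2 (n k : nat) : nat :=
  match n, k with
  | 0, 0 => 1
  | 0, _.+1 => 0
  | _.+1, 0 => 0
  | n'.+1, k'.+1 => (k'.+1 * stirling2 n' k'.+1 + stirling2 n' k')%N
  end.

Definition bell_poly (R : nzRingType) (n : nat) (t : R) : R :=
  \sum_(k < n.+1) (stirling2 n k)%:R * t ^+ k.

Definition exp_trunc (R : fieldType) (n : nat) : {poly R} :=
  \sum_(j < n.+1) (j`!%:R)^-1 *: 'X^j.

(* p-Bell numbers: B_{n,p} = n! [z^n] sum_{k>=0} C(k+p,p)^{-1} (e^z-1)^k / k!.
   Since (e^z - 1)^k has z-adic valuation k, only k <= n contribute to [z^n],
   and the coefficient of z^n is unaffected by truncating e^z at degree n. *)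
Definition pBell (R : fieldType) (n p : nat) : R :=
  n`!%:R * (\sum_(k < n.+1)
              (('C(k + p, p)%:R)^-1 * (k`!%:R)^-1) *: (exp_trunc R n - 1) ^+ k)`_n.

(* Main.v *)
Require Import Defs.
From HB Require Import structures.
From mathcomp Require Import all_boot all_order all_algebra.
From mathcomp Require Import all_classical all_reals all_analysis.
From mathcomp Require Import beta_distribution ring.
Import Order.TTheory GRing.Theory Num.Theory.
Local Open Scope ring_scope.
Local Open Scope classical_set_scope.

Section An.
Variable R : realType.
Local Notation mu := (@lebesgue_measure R).

Lemma intXM (a b : nat) :
  Rintegral mu `[0%R, 1%R] (XMonemX a b) = (a`! * b`!)%:R / (a + b).+1`!%:R.
Proof. by rewrite Rintegral_mkcond -beta_fun_fact. Qed.

Lemma intSum (q m : nat) (c : nat -> R) :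
  mu.-integrable `[0%R, 1%R] (EFin \o (fun x => \sum_(k < m) c k * XMonemX k q x)) /\
  Rintegral mu `[0%R, 1%R] (fun x => \sum_(k < m) c k * XMonemX k q x) =
  \sum_(k < m) c k * Rintegral mu `[0%R, 1%R] (XMonemX k q).
Proof.
elim: m => [|m [IHi IHe]].
  split.
    apply: (eq_integrable _ (cst 0%E)) => //; last exact: integrable0.
    by move=> x _; rewrite /=; congr EFin; rewrite (big_ord0 (0:R)).
  under eq_Rintegral do rewrite big_ord0.
  by rewrite big_ord0 Rintegral_cst //= mul0r.
have iT : mu.-integrable `[0%R, 1%R] (EFin \o (fun x => c m * XMonemX m q x)).
  apply: (eq_integrable _ _ _ _ (integrableZl _ (c m) (integrable_XMonemX m q))) => //.
split.
  apply: (eq_integrable _ _ _ _ (integrableD _ IHi iT)) => //.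
  by move=> x _ /=; rewrite big_ord_recr EFinD.
under eq_Rintegral do rewrite big_ord_recr /=.
rewrite RintegralD // IHe big_ord_recr /= RintegralZl //.
exact: integrable_XMonemX.
Qed.
End An.
Local Close Scope classical_set_scope.
Section Alg.
Variable R : numFieldType.

Lemma coef_exp_trunc n i :
  (exp_trunc R n)`_i = if (i <= n)%N then (i`!%:R)^-1 else 0.
Proof. by rewrite /exp_trunc -(poly_def n.+1 (fun j => (j`!%:R)^-1)) coef_poly ltnS. Qed.

Lemma coefA n m k : (m <= n)%N ->
  ((exp_trunc R n - 1) ^+ k)`_m * m`!%:R = (k`! * stirling2 m k)%:R.
Proof.
set F := exp_trunc R n - 1.
have F0 : F`_0 = 0 by rewrite coefB coef_exp_trunc coef1 /= fact0 invr1 subrr.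
elim: m k => [|m IH] k hm.
  rewrite fact0 mulr1; case: k => [|k]; first by rewrite expr0 coef1.
  by rewrite exprSr coefM big_ord1 F0 mulr0 /= muln0.
case: k => [|k]; first by rewrite expr0 coef1 /= mul0r muln0.
have hm' : (m <= n)%N by apply: ltnW.
have D : ((F ^+ k.+1)^`())`_m = ((F ^+ k.+1)`_m + (F ^+ k)`_m) *+ k.+1.
  rewrite deriv_exp /= coefMn; congr (_ *+ _).
  rewrite coefM.
  have -> : (F ^+ k.+1)`_m + (F ^+ k)`_m = ((F + 1) * (F ^+ k))`_m.
    by rewrite mulrDl mul1r -exprS coefD.
  rewrite coefM; apply: eq_bigr => j _; congr (_ * _).
  have hj : (j <= m)%N by rewrite -ltnS.
  have d1 : (1 : {poly R})^`() = 0 by rewrite -polyC1 derivC.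
  rewrite /F derivB d1 subr0 coef_deriv subrK !coef_exp_trunc.
  rewrite (leq_trans hj hm') (leq_trans _ hm) ?ltnS //.
  rewrite factS natrM invfM -[_ / _ *+ _]mulr_natr mulrAC mulVf ?mul1r //.
have E1 := coef_deriv (F ^+ k.+1) m.
rewrite D in E1.
have H1 := IH k.+1 hm'. have H2 := IH k hm'.
have Ea : (F ^+ k.+1)`_m.+1 * m.+1%:R = ((F ^+ k.+1)`_m + (F ^+ k)`_m) * k.+1%:R.
  by rewrite !mulr_natr E1.
transitivity (((F ^+ k.+1)`_m * m`!%:R + (F ^+ k)`_m * m`!%:R) * k.+1%:R).
  rewrite factS natrM mulrA Ea; ring.
rewrite H1 H2 -natrD -natrM; congr _%:R.
rewrite /= !factS; ring.
Qed.
End Alg.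
Local Open Scope classical_set_scope.

Theorem mainTheorem19 (R : realType) (n p : nat) (hp : (1 <= p)%N) :
  pBell R n p =
  p%:R * Rintegral (@lebesgue_measure R) `[0%R, 1%R]
           (fun t : R => (1 - t) ^+ (p - 1) * bell_poly n t).
Proof.
case: p hp => [//|q] _.
rewrite subn1 /=.
have -> : (fun t : R => (1 - t) ^+ q * bell_poly n t) =
    (fun t => \sum_(k < n.+1) (stirling2 n k)%:R * XMonemX k q t).
  apply/funext => t; rewrite /bell_poly mulr_sumr; apply: eq_bigr => k _.
  by rewrite /XMonemX; ring.
rewrite (proj2 (intSum R q n.+1 (fun k => (stirling2 n k)%:R))).
rewrite /pBell coef_sum !mulr_sumr; apply: eq_bigr => k _.
rewrite coefZ intXM.
have hF := @coefA R n n k (leqnn n).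
have hC := bin_fact (leq_addl k q.+1).
rewrite addnK in hC.
have -> : ((exp_trunc R n - 1) ^+ k)`_n = (k`! * stirling2 n k)%:R / n`!%:R.
  by rewrite -hF mulfK // pnatr_eq0 -lt0n fact_gt0.
rewrite -addnS -hC factS !natrM.
have h1 : (n`!%:R : R) != 0 by rewrite pnatr_eq0 -lt0n fact_gt0.
have h2 : (k`!%:R : R) != 0 by rewrite pnatr_eq0 -lt0n fact_gt0.
have h3 : (q`!%:R : R) != 0 by rewrite pnatr_eq0 -lt0n fact_gt0.
have h4 : ('C(k + q.+1, q.+1)%:R : R) != 0 by rewrite pnatr_eq0 -lt0n bin_gt0 leq_addl.
have h5 : (q.+1%:R : R) != 0 by rewrite pnatr_eq0.
field.
rewrite h1 h2 h3 h4 addrC natr1 h5 //.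
Qed.
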